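(* Fix $\sigma\in(0,\tfrac12)$. The following assertions hold for problem $(P_{\lambda,\mu})$ described in the context: (i) for every $\lambda>0$ there exists $\mu_0^{*}(\lambda)>0$ such that $(P_{\lambda,\mu})$ has no solution for every $\mu\in(0,\mu_0^{*}(\lambda))$; (ii) there exists $\lambda^{*}>0$ such that for every $\lambda\in(0,\lambda^{*})$ there exists $\mu_0^{**}(\lambda)>\mu_0^{*}(\lambda)$ such that $(P_{\lambda,\mu})$ has no solution for every $\mu>\mu_0^{**}(\lambda)$.
   Context: Let $\sigma\in(0,\tfrac12)$ be fixed and let $g(s)=s^2(1-s)$ for $s\in[0,1]$. For $\lambda>0$, $\mu>0$ define the step function $a_{\lambda,\mu}:[0,1]\to\mathbb{R}$ by $a_{\lambda,\mu}(t)=\lambda$ if $t\in[0,\sigma]\cup[1-\sigma,1]$ and $a_{\lambda,\mu}(t)=-\mu$ if $t\in(\sigma,1-\sigma)$. Problem $(P_{\lambda,\mu})$ is: $-u''(t)=a_{\lambda,\mu}(t)\,g(u(t))$ for $t\in(0,1)$, $0\le u(t)\le 1$ on $[0,1]$, $u'(0)=u'(1)=0$. A solution of $(P_{\lambda,\mu})$ is a function $u\in\mathcal{C}^1([0,1])$ with $u'$ absolutely continuous, $0<u(t)<1$ for all $t\in[0,1]$, which satisfies the differential equation for a.e. $t\in(0,1)$ and the Neumann conditions $u'(0)=u'(1)=0$. *)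

(* Defs.v *)
From HB Require Import structures.
From mathcomp Require Import all_boot all_order all_algebra.
From mathcomp Require Import all_classical all_reals all_analysis.
Set Implicit Arguments. Unset Strict Implicit. Unset Printing Implicit Defensive.
Import Order.TTheory GRing.Theory Num.Theory.
Import numFieldNormedType.Exports.
Local Open Scope classical_set_scope.
Local Open Scope ring_scope.

Section Defs.
Variable R : realType.

Definition gfun (s : R) : R := s ^+ 2 * (1 - s).

Definition aweight (sigma lam mu t : R) : R :=
  if (t <= sigma) || (1 - sigma <= t) then lam else - mu.

Definition abs_continuous_on (a b : R) (f : R -> R) : Prop :=
  forall eps : R, 0 < eps -> exists2 delta : R, 0 < delta &
    forall (n : nat) (x y : 'I_n -> R),
      (forall i, a <= x i /\ x i <= y i /\ y i <= b) ->
      (forall i j : 'I_n, (i < j)%N -> y i <= x j) ->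
      \sum_(i < n) (y i - x i) < delta ->
      \sum_(i < n) `|f (y i) - f (x i)| < eps.

(* u is a solution of (P_{lambda,mu}): u in C^1([0,1]) with derivative v (one-sided at
   the endpoints), v absolutely continuous on [0,1], 0 < u < 1 on [0,1],
   -v'(t) = a(t) g(u(t)) for a.e. t in (0,1), and v(0) = v(1) = 0. *)
Definition is_solution (sigma lam mu : R) (u : R -> R) : Prop :=
  exists v : R -> R,
    (forall t : R, t \in `[0, 1] ->
       (fun s => (u s - u t) / (s - t)) @ within (fun s => s \in `[0, 1] /\ s != t) (nbhs t)
         --> v t) /\
    {within `[0, 1], continuous v} /\
    abs_continuous_on 0 1 v /\
    (forall t : R, t \in `[0, 1] -> 0 < u t /\ u t < 1) /\
    {ae (@lebesgue_measure R), forall t : R, t \in `]0, 1[ ->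
        derivable v t 1 /\ - (derive1 v t) = aweight sigma lam mu t * gfun (u t)} /\
    v 0 = 0 /\ v 1 = 0.

End Defs.

(* Main.v *)
Require Import Defs.
From HB Require Import structures.
From mathcomp Require Import all_boot all_order all_algebra.
From mathcomp Require Import all_classical all_reals all_analysis.
From mathcomp Require Import ring lra.
Import Order.TTheory GRing.Theory Num.Theory.
Import numFieldNormedType.Exports.
Local Open Scope classical_set_scope.
Local Open Scope ring_scope.
Set Warnings "-notation-overridden,-ambiguous-paths,-notation-incompatible-prefix".
Definition fine_part {R : realType} (P : R -> R -> R -> Prop) (x s : R) (n : nat)
  (p tau : nat -> R) :=
  [/\ p 0%N = x, p n = s, (forall i j, (i <= j)%N -> (j <= n)%N -> p i <= p j) &
   (forall i, (i < n)%N -> [/\ p i <= tau i, tau i <= p i.+1 & P (tau i) (p i) (p i.+1)])].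

Lemma cousin {R : realType} (P : R -> R -> R -> Prop) (x y : R) : x <= y ->
  (forall t, x <= t -> t <= y -> exists2 d, 0 < d & forall a b, x <= a -> a <= t -> t <= b ->
      b <= y -> t - d < a -> b < t + d -> P t a b) ->
  exists n p tau, fine_part P x y n p tau.
Proof.
move=> xy gauge.
pose S := [set s | x <= s /\ s <= y /\ exists n p tau, fine_part P x s n p tau].
have Sx : S x.
  split => //; split => //; exists 0%N, (fun _ => x), (fun _ => x); split => //.
have hS : has_sup S.
  split; first by exists x.
  by exists y => s [_ []].
set c := sup S.
have xc : x <= c by exact: sup_upper_bound.
have cy : c <= y by apply: ge_sup; [exists x | move=> s [_ []]].
have [d d0 Hd] := gauge c xc cy.
have [s Ss cds] := sup_adherent d0 hS.
have [xs [sy [n [p [tau [p0 pn pmon ppieces]]]]]] := Ss.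
have sc : s <= c by apply: sup_upper_bound.
pose e := Num.min (c + d / 2) y.
have ce : c <= e by rewrite /e le_min cy andbT lerDl divr_ge0 // ltW.
have ey : e <= y by rewrite /e ge_min lexx orbT.
have ecd : e < c + d.
  have : e <= c + d / 2 by rewrite /e ge_min lexx.
  lra.
have Se : S e.
  split; first exact: le_trans xc ce.
  split => //.
  exists n.+1, (fun i => if (i <= n)%N then p i else e), (fun i => if (i < n)%N then tau i else c).
  split => //=.
  - by rewrite ltnn.
  - move=> i j ij jn.
    case: (leqP i n) => hi; case: (leqP j n) => hj.
    + exact: pmon.
    + apply: le_trans (pmon i n hi (leqnn n)) _; rewrite pn; exact: le_trans sc ce.
    + by move: (leq_trans hi ij); rewrite ltnNge hj.
    + by [].
  - move=> i; rewrite ltnS => iN.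
    case: (ltnP i n) => hin.
    + by rewrite (ltnW hin); apply: ppieces.
    + have -> : i = n by apply/eqP; rewrite eqn_leq iN hin.
      rewrite leqnn; split => //; first by rewrite pn.
      rewrite pn; apply: Hd => //; lra.
have ec : e <= c by apply: sup_upper_bound.
have yc : y <= c.
  move: ec; rewrite /e ge_min => /orP [|] //.
  rewrite -subr_le0 addrAC subrr add0r => h.
  have : 0 < d / 2 by rewrite divr_gt0.
  by rewrite ltNge h.
have ye : e = y by apply/eqP; rewrite eq_le ey (le_trans yc ce).
by move: Se; rewrite ye => [[_ [_]]].
Qed.
Lemma core {R : realType} (f : R -> R) (x y K : R) (N : set R) :
  x <= y -> measurable N -> lebesgue_measure N = 0%E ->
  (N = set0 \/ abs_continuous_on x y f) ->
  (forall t, x <= t -> t <= y -> ~ N t -> forall e, 0 < e -> exists2 d, 0 < d &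
     forall s, x <= s -> s <= y -> `|s - t| < d ->
       (t <= s -> f s - f t <= (K + e) * (s - t)) /\ (s <= t -> f t - f s <= (K + e) * (t - s))) ->
  f y - f x <= K * (y - x).
Proof.
move=> xy mN N0 hAC hD.
apply/ler_addgt0Pr => eps eps0.
pose C := y - x + `|K| + 2.
have C0 : 0 < C by rewrite /C; have := normr_ge0 K; lra.
pose e := eps / (C + eps).
have Ce0 : 0 < C + eps by lra.
have eCe : e * (C + eps) = eps by rewrite /e mulrVK // unitfE gt_eqF.
have e0 : 0 < e by rewrite /e divr_gt0.
have e1 : e < 1 by nra.
have eC : e * C <= eps by nra.
have [d0 d00 HAC] : exists2 d0, 0 < d0 & forall n (xs ys : 'I_n -> R),
   (forall i, x <= xs i /\ xs i <= ys i /\ ys i <= y) ->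
   (forall i j : 'I_n, (i < j)%N -> ys i <= xs j) ->
   (N = set0 -> forall i, ys i = xs i) ->
   \sum_(i < n) (ys i - xs i) < d0 -> \sum_(i < n) `|f (ys i) - f (xs i)| < e.
  case: hAC => [N0e|AC].
  - exists 1 => // n xs ys _ _ /(_ N0e) H _.
    by rewrite big1 // => i _; rewrite H subrr normr0.
  - have [d dd H] := AC e e0.
    by exists d => // n xs ys h1 h2 _; exact: H.
pose d1 := Num.min d0 e.
have d10 : 0 < d1 by rewrite /d1 lt_min d00 e0.
have d1e : d1 <= e by rewrite /d1 ge_min lexx orbT.
have d1d0 : d1 <= d0 by rewrite /d1 ge_min lexx.
have Nfin : (lebesgue_measure N < +oo)%E by rewrite N0 ltry.
have [U [oU NU muUN]] := lebesgue_regularity_outer mN Nfin d10.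
have mU : measurable U by exact: measurable_realfun.open_measurable.
have muU : (lebesgue_measure U < d1%:E)%E.
  rewrite -(setDUK NU) setUC.
  apply: le_lt_trans (measureU2 _ _ _) _.
  - exact: measurableD.
  - exact: mN.
  have -> : forall z : \bar R, (z + lebesgue_measure N = z)%E by move=> z; rewrite N0 adde0.
  done.
pose P t a b := (N t -> [set z | a <= z < b] `<=` U) /\
                (~ N t -> f b - f a <= (K + e) * (b - a)).
have [n [p [tau [p0 pn pmon pp]]]] : exists n p tau, fine_part P x y n p tau.
  apply: cousin => // t xt ty; case: (pselect (N t)) => Nt.
  - have : nbhs t U by apply: open_nbhs_nbhs; split => //; exact: NU.
    move=> /nbhs_ballP [r r0 Hr].
    exists r => // a b xa hat htb hby tal btr; split => // _ z /= /andP [az zb].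
    apply: Hr; rewrite -ball_normE /=.
    rewrite ltr_norml; apply/andP; split; lra.
  - have [d dd Hd] := hD t xt ty Nt e e0.
    exists d => // a b xa hat htb hby tal btr; split => // _.
    have [h1 _] := Hd b (le_trans xt htb) hby (ltac:(rewrite ger0_norm; lra)).
    have [_ h2] := Hd a xa (le_trans hat ty) (ltac:(rewrite ler0_norm; lra)).
    have := h1 htb; have := h2 hat; lra.
pose bad i := `[< N (tau i) >].
pose xs (i : 'I_n) := p i.
pose ys (i : 'I_n) := if bad i then p i.+1 else p i.
have pinc i : (i < n)%N -> p i <= p i.+1 by move=> hi; have [h1 h2 _] := pp i hi; exact: le_trans h1 h2.
have xp i : (i <= n)%N -> x <= p i by move=> hi; rewrite -p0; exact: pmon.
have py i : (i <= n)%N -> p i <= y by move=> hi; rewrite -pn; exact: pmon.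
have tele (F : R -> R) : F y - F x = \sum_(i < n) (F (p i.+1) - F (p i)).
  have := @telescope_sumr R 0 n (fun k => F (p k)) (leq0n n).
  by rewrite big_mkord p0 pn => ->.
have xsys (i : 'I_n) : xs i <= ys i by rewrite /xs /ys; case: (bad i) => //; exact: pinc.
have Hbad : \sum_(i < n) (ys i - xs i) < d1.
  pose F (i : 'I_n) := [set` `[xs i, ys i[%R] : set R.
  have mF i : measurable (F i) by exact: measurable_itv.
  have tF : trivIset setT F.
    move=> i j _ _ [z [/= /andP[h1 h2] /andP[h3 h4]]].
    apply/val_inj/eqP; rewrite eqn_leq; apply/andP; split; rewrite leqNgt; apply/negP => ij.
    - have : ys j <= xs i.
        apply: le_trans (_ : p j.+1 <= p i).
          rewrite /ys; case: (bad j) => //; exact: pinc.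
        by apply: pmon => //; exact: ltnW (ltn_ord i).
      rewrite /= !bnd_simp in h1 h2 h3 h4; lra.
    - have : ys i <= xs j.
        apply: le_trans (_ : p i.+1 <= p j).
          rewrite /ys; case: (bad i) => //; exact: pinc.
        by apply: pmon => //; exact: ltnW (ltn_ord j).
      rewrite /= !bnd_simp in h1 h2 h3 h4; lra.
  have := measure_bigsetU_ord (@lebesgue_measure R) xpredT mF tF.
  have -> : \sum_(i < n) lebesgue_measure (F i) = (\sum_(i < n) (ys i - xs i))%:E.
    rewrite -sumEFin; apply: eq_bigr => i _.
    rewrite /F lebesgue_measure_itv /=.
    rewrite lte_fin; case: ltP => h; first by rewrite -EFinD.
    by have -> : ys i - xs i = 0 by have := xsys i; lra.
  move=> Heq.
  rewrite -lte_fin -Heq.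
  apply: le_lt_trans muU.
  apply: le_measure; rewrite ?inE //.
    by apply: bigsetU_measurable => i _; exact: mF.
  apply: (big_ind (fun X => X `<=` U)) => //.
    by move=> X Y XU YU z [/XU|/YU].
  move=> i _ z /= /andP [h1 h2]; rewrite /= !bnd_simp in h1 h2.
  have [_ _ [HP _]] := pp i (ltn_ord i).
  move: h1 h2; rewrite /xs /ys /bad; case: asboolP => hb h1 h2; last lra.
  by apply: HP => //=; rewrite h1 h2.
have Hsum1 : \sum_(i < n) `|f (ys i) - f (xs i)| < e.
  apply: HAC.
  - move=> i; split; first exact: xp (ltnW (ltn_ord i)).
    split; first exact: xsys.
    rewrite /ys; case: (bad i); [exact: py (ltn_ord i) | exact: py (ltnW (ltn_ord i))].
  - move=> i j ij; apply: le_trans (_ : p i.+1 <= p j).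
      rewrite /ys; case: (bad i) => //; exact: pinc.
    by apply: pmon => //; exact: ltnW (ltn_ord j).
  - move=> Ne i; rewrite /ys /bad; case: asboolP => // h.
    by move: h; rewrite Ne.
  - exact: lt_le_trans Hbad d1d0.
have term (i : 'I_n) : f (p i.+1) - f (p i) <=
    `|f (ys i) - f (xs i)| + (K + e) * (p i.+1 - p i) + `|K + e| * (ys i - xs i).
  have [_ _ [_ HP]] := pp i (ltn_ord i).
  rewrite /ys /xs /bad; case: asboolP => hb.
  - have := ler_norm (f (p i.+1) - f (p i)); have := ler_norm (-(K+e)); rewrite normrN.
    have := pinc i (ltn_ord i); nra.
  - rewrite !subrr normr0 mulr0 addr0 add0r; exact: HP.
have hyx : \sum_(i < n) (p i.+1 - p i) = y - x by rewrite (tele (fun z => z)).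
rewrite (tele f); apply: le_trans (ler_sum _ (fun i _ => term i)) _.
rewrite !big_split /= -!mulr_sumr hyx.
set A := \sum_(i < n) _ in Hsum1 *.
set B := \sum_(i < n) (ys i - xs i) in Hbad *.
have B0 : 0 <= B by apply: sumr_ge0 => i _; have := xsys i; lra.
have hKe : `|K + e| <= `|K| + 1 by apply: le_trans (ler_normD _ _) _; rewrite (gtr0_norm e0); lra.
have hKB : `|K + e| * B <= (`|K| + 1) * e.
  apply: le_trans (_ : `|K + e| * e <= _).
    by apply: ler_wpM2l => //; lra.
  by apply: ler_wpM2r => //; lra.
have yx0 : 0 <= y - x by lra.
rewrite /C in eC.
nra.
Qed.
Definition LA {R : realType} (D : set R) (f : R -> R) (t L : R) :=
  forall e, 0 < e -> exists2 d, 0 < d & forall s, D s -> `|s - t| < d ->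
    `|f s - f t - L * (s - t)| <= e * `|s - t|.

Lemma LA_neg {R : realType} (D : set R) f t L : LA D f t L -> LA D (fun z => - f z) t (- L).
Proof.
move=> H e e0; have [d d0 Hd] := H e e0; exists d => // s Ds hs.
by rewrite -normrN; have := Hd s Ds hs; congr (_ <= _); congr (`|_|); ring.
Qed.

Lemma LA_dini {R : realType} (D : set R) f t L K x y : LA D f t L -> L <= K ->
  (forall s, x <= s -> s <= y -> D s) ->
  forall e, 0 < e -> exists2 d, 0 < d & forall s, x <= s -> s <= y -> `|s - t| < d ->
       (t <= s -> f s - f t <= (K + e) * (s - t)) /\ (s <= t -> f t - f s <= (K + e) * (t - s)).
Proof.
move=> H LK HD e e0; have [d d0 Hd] := H e e0; exists d => // s xs sy hs.
have := Hd s (HD s xs sy) hs => h; split => ts.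
- move: h; rewrite (ger0_norm (_ : 0 <= s - t)) ?subr_ge0 // => h.
  have := ler_norm (f s - f t - L * (s - t)); nra.
- move: h; rewrite (ler0_norm (_ : s - t <= 0)) ?subr_le0 // => h.
  have := ler_norm (- (f s - f t - L * (s - t))); rewrite normrN; nra.
Qed.

Lemma deriv_LA {R : realType} (f : R -> R) t : derivable f t 1 -> LA setT f t (derive1 f t).
Proof.
move=> H e e0.
move: (H) => /cvgrPdist_le /(_ e e0).
rewrite /prop_near1 /= => /nbhs_ballP [r r0 Hr].
rewrite derive1E; exists r => // s _ hs.
have [->|st] := eqVneq s t; first by rewrite !subrr normr0 !mulr0 subrr normr0.
have st0 : s - t != 0 by rewrite subr_eq0.
have := Hr (s - t) _ st0.
rewrite [(s - t)%:A]mulr1 subrK => h.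
have -> : f s - f t - 'D_1 f t * (s - t) = (s - t) * ((s - t)^-1 *: (f s - f t) - 'D_1 f t).
  by rewrite /GRing.scale /=; field.
rewrite normrM mulrC ler_wpM2r // distrC; apply: h.
by rewrite -ball_normE /= sub0r normrN.
Qed.
Lemma within_LA {R : realType} (u v : R -> R) t :
  (fun s => (u s - u t) / (s - t)) @ within (fun s => s \in `[0, 1] /\ s != t) (nbhs t) --> v t ->
  LA (fun s => s \in `[0, 1]) u t (v t).
Proof.
move=> /cvgrPdist_le H e e0; have := H e e0.
rewrite /prop_near1 /= => /nbhs_ballP [r r0 Hr].
exists r => // s s01 hs.
have [->|st] := eqVneq s t; first by rewrite !subrr normr0 !mulr0 subrr normr0.
have st0 : s - t != 0 by rewrite subr_eq0.
have := Hr s _ (conj s01 st).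
move=> h.
have -> : u s - u t - v t * (s - t) = (s - t) * ((u s - u t) / (s - t) - v t).
  by field.
rewrite normrM mulrC ler_wpM2r // distrC; apply: h.
by rewrite -ball_normE /= distrC.
Qed.
Lemma AC_sub {R : realType} (f : R -> R) x y a b : abs_continuous_on x y f -> x <= a -> b <= y ->
  abs_continuous_on a b f.
Proof.
move=> H xa bY e e0; have [d d0 Hd] := H e e0; exists d => // n xs ys h1 h2 h3.
apply: Hd => // i; have [? [? ?]] := h1 i; split; first exact: le_trans xa _.
by split => //; exact: le_trans bY.
Qed.

Lemma AC_neg {R : realType} (f : R -> R) a b : abs_continuous_on a b f ->
  abs_continuous_on a b (fun z => - f z).
Proof.
move=> H e e0; have [d d0 Hd] := H e e0; exists d => // n xs ys h1 h2 h3.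
under eq_bigr do rewrite -opprD normrN.
exact: Hd.
Qed.

Lemma ae_null {R : realType} (Q : R -> Prop) : {ae (@lebesgue_measure R), forall t, Q t} ->
  exists N : set R, [/\ measurable N, lebesgue_measure N = 0%E & forall t, ~ N t -> Q t].
Proof.
case => A [mA A0 sub]; exists A; split => // t nAt.
by have [//|nQ] := pselect (Q t); exfalso; apply: nAt; apply: sub.
Qed.

Lemma null_add2 {R : realType} (N : set R) a b : measurable N -> lebesgue_measure N = 0%E ->
  measurable (N `|` [set a] `|` [set b]) /\ lebesgue_measure (N `|` [set a] `|` [set b]) = 0%E.
Proof.
move=> mN N0.
have mNa : measurable (N `|` [set a]) by apply: measurableU => //; exact: measurable_set1.
split; first by apply: measurableU => //; exact: measurable_set1.
apply/eqP; rewrite eq_le measure_ge0 andbT.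
have := measureU2 (@lebesgue_measure R) mNa (measurable_set1 b).
have E1 : forall (z : \bar R) c, (z + lebesgue_measure [set c] = z)%E.
  by move=> z c; rewrite lebesgue_measure_set1 adde0.
rewrite E1 => h; apply: le_trans h _.
have := measureU2 (@lebesgue_measure R) mN (measurable_set1 a).
rewrite E1 => h; apply: le_trans h _.
by rewrite le_eqVlt; apply/orP; left; apply/eqP; exact: N0.
Qed.

Lemma v_piece {R : realType} (v w : R -> R) (a b Klo Khi : R) :
  a <= b -> abs_continuous_on a b v ->
  {ae (@lebesgue_measure R), forall t, t \in `]0, 1[ -> derivable v t 1 /\ - derive1 v t = w t} ->
  0 <= a -> b <= 1 ->
  (forall t, a < t -> t < b -> Klo <= w t /\ w t <= Khi) ->
  Klo * (b - a) <= v a - v b /\ v a - v b <= Khi * (b - a).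
Proof.
move=> ab AC Hae a0 b1 Hw.
have [N0 [mN0 N00 HN0]] := @ae_null R _ Hae.
have [mN N0'] := null_add2 N0 a b mN0 N00.
set N := N0 `|` [set a] `|` [set b] in mN N0'.
have good t : a <= t -> t <= b -> ~ N t ->
    [/\ derivable v t 1, - derive1 v t = w t & Klo <= w t /\ w t <= Khi].
  move=> ha hb nN.
  have ta : t != a by apply/eqP => ta; apply: nN; left; right.
  have tb : t != b by apply/eqP => tb; apply: nN; right.
  have hat : a < t by rewrite lt_neqAle eq_sym ta ha.
  have htb : t < b by rewrite lt_neqAle tb hb.
  have [] := HN0 t (fun h => nN (or_introl (or_introl h))).
    by rewrite in_itv /=; apply/andP; split; lra.
  by move=> d1 d2; split => //; exact: Hw.
split.
- have := @core R v a b (- Klo) N ab mN N0' (or_intror AC).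
  have H : forall t : R, a <= t -> t <= b -> ~ N t -> forall e : R, 0 < e -> exists2 d : R, 0 < d &
     forall s : R, a <= s -> s <= b -> `|s - t| < d ->
       (t <= s -> v s - v t <= (- Klo + e) * (s - t)) /\
       (s <= t -> v t - v s <= (- Klo + e) * (t - s)).
    move=> t ha hb nN; have [d1 d2 [d3 _]] := good t ha hb nN.
    apply: (@LA_dini R setT _ _ (derive1 v t)) => //; first exact: deriv_LA d1.
    lra.
  move=> /(_ H); lra.
- have := @core R (fun z => - v z) a b Khi N ab mN N0' (or_intror (@AC_neg R v a b AC)).
  have H : forall t : R, a <= t -> t <= b -> ~ N t -> forall e : R, 0 < e -> exists2 d : R, 0 < d &
     forall s : R, a <= s -> s <= b -> `|s - t| < d ->
       (t <= s -> - v s - - v t <= (Khi + e) * (s - t)) /\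
       (s <= t -> - v t - - v s <= (Khi + e) * (t - s)).
    move=> t ha hb nN; have [d1 d2 [_ d3]] := good t ha hb nN.
    apply: (@LA_dini R setT _ _ (- derive1 v t)) => //; first exact: (@LA_neg R setT v t _ (@deriv_LA R v t d1)).
    lra.
  move=> /(_ H); lra.
Qed.
Lemma u_lip {R : realType} (u v : R -> R) B s t :
  (forall r, r \in `[0, 1] ->
     (fun z => (u z - u r) / (z - r)) @ within (fun z => z \in `[0, 1] /\ z != r) (nbhs r) --> v r) ->
  (forall r, r \in `[0, 1] -> `|v r| <= B) ->
  0 <= s -> s <= t -> t <= 1 -> `|u t - u s| <= B * (t - s).
Proof.
move=> Hl Hv s0 st t1.
have D r : s <= r -> r <= t -> r \in `[0, 1] by move=> h1 h2; rewrite in_itv /=; apply/andP; split; lra.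
have m0 : measurable (@set0 R) by exact: measurable0.
have mu0 : lebesgue_measure (@set0 R) = 0%E by exact: measure0.
have up := @core R u s t B set0 st m0 mu0 (or_introl erefl).
have lo := @core R (fun z => - u z) s t B set0 st m0 mu0 (or_introl erefl).
rewrite ler_norml; apply/andP; split.
- suff : - u t - - u s <= B * (t - s) by lra.
  apply: lo => r hs ht _.
  apply: (@LA_dini R (fun z => z \in `[0, 1]) _ _ (- v r)).
  + exact: (@LA_neg R _ u r _ (@within_LA R u v r (Hl r (D r hs ht)))).
  + have := Hv r (D r hs ht); have := ler_norm (- v r); rewrite normrN; lra.
  + move=> z h1 h2; exact: D.
- apply: up => r hs ht _.
  apply: (@LA_dini R (fun z => z \in `[0, 1]) _ _ (v r)).
  + exact: (@within_LA R u v r (Hl r (D r hs ht))).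
  + have := Hv r (D r hs ht); have := ler_norm (v r); lra.
  + move=> z h1 h2; exact: D.
Qed.
Lemma aw_left {R : realType} (sigma lam mu t : R) : t <= sigma -> aweight sigma lam mu t = lam.
Proof. by move=> h; rewrite /aweight h. Qed.

Lemma aw_right {R : realType} (sigma lam mu t : R) : 1 - sigma <= t -> aweight sigma lam mu t = lam.
Proof. by move=> h; rewrite /aweight h orbT. Qed.

Lemma aw_mid {R : realType} (sigma lam mu t : R) : sigma < t -> t < 1 - sigma ->
  aweight sigma lam mu t = - mu.
Proof. by move=> h1 h2; rewrite /aweight (ltNge sigma t) in h1; rewrite /aweight (negbTE h1) /= leNgt h2. Qed.

Lemma bounds {R : realType} (sigma lam mu : R) (u v : R -> R) (m S : R) :
  0 < sigma -> sigma < 2^-1 -> 0 < lam -> 0 < mu ->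
  (forall t : R, t \in `[0, 1] ->
       (fun s => (u s - u t) / (s - t)) @ within (fun s => s \in `[0, 1] /\ s != t) (nbhs t)
         --> v t) ->
  abs_continuous_on 0 1 v ->
  {ae (@lebesgue_measure R), forall t : R, t \in `]0, 1[ ->
        derivable v t 1 /\ - (derive1 v t) = aweight sigma lam mu t * gfun (u t)} ->
  v 0 = 0 -> v 1 = 0 ->
  0 <= m -> (forall t, 0 <= t -> t <= 1 -> m <= gfun (u t) /\ gfun (u t) <= S) ->
  [/\ lam * sigma * m <= - v sigma <= lam * sigma * S,
      lam * sigma * m <= v (1 - sigma) <= lam * sigma * S,
      mu * (1 - 2 * sigma) * m <= v (1 - sigma) - v sigma <= mu * (1 - 2 * sigma) * S &
      forall s t, 0 <= s -> s <= t -> t <= 1 -> `|u t - u s| <= (v (1 - sigma) - v sigma) * (t - s)].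
Proof.
move=> s0 s1 l0 mu0 Hder HAC Hae v0 v1 m0 HG.
have s2 : sigma < 1 - sigma by lra.
have piece a b c Klo Khi : 0 <= a -> a <= b -> b <= 1 ->
    (forall t, a < t -> t < b -> aweight sigma lam mu t = c) ->
    (forall t, 0 <= t -> t <= 1 -> Klo <= c * gfun (u t) <= Khi) ->
    Klo * (b - a) <= v a - v b <= Khi * (b - a).
  move=> a0 ab b1 Hc HK.
  have Hw : forall t, a < t -> t < b -> Klo <= aweight sigma lam mu t * gfun (u t) /\
      aweight sigma lam mu t * gfun (u t) <= Khi.
    by move=> t ht1 ht2; rewrite Hc //; apply/andP; apply: HK; lra.
  have [h1 h2] := @v_piece R v (fun t => aweight sigma lam mu t * gfun (u t)) a b Klo Khi ab
     (@AC_sub R v 0 1 a b HAC a0 b1) Hae a0 b1 Hw.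
  by rewrite h1 h2.
have Gm t : 0 <= t -> t <= 1 -> m <= gfun (u t) by move=> *; have [] := HG t.
have GS t : 0 <= t -> t <= 1 -> gfun (u t) <= S by move=> *; have [] := HG t.
have mS : m <= S by apply: le_trans (Gm 0 _ _) (GS 0 _ _); lra.
have L a b : 0 <= a -> a <= b -> b <= sigma ->
    lam * m * (b - a) <= v a - v b <= lam * S * (b - a).
  move=> a0 ab bs; apply: (piece a b lam) => //; first lra.
    by move=> t _ tb; apply: aw_left; lra.
  move=> t t0 t1; apply/andP; split; apply: ler_wpM2l; try lra.
    exact: Gm. exact: GS.
have Rr a b : 1 - sigma <= a -> a <= b -> b <= 1 ->
    lam * m * (b - a) <= v a - v b <= lam * S * (b - a).
  move=> a0 ab bs; apply: (piece a b lam) => //; first lra.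
    by move=> t ta _; apply: aw_right; lra.
  move=> t t0 t1; apply/andP; split; apply: ler_wpM2l; try lra.
    exact: Gm. exact: GS.
have M a b : sigma <= a -> a <= b -> b <= 1 - sigma ->
    - (mu * S) * (b - a) <= v a - v b <= - (mu * m) * (b - a).
  move=> a0 ab bs; apply: (piece a b (- mu)) => //; try lra.
    by move=> t ta tb; apply: aw_mid; lra.
  move=> t t0 t1; rewrite !mulNr lerN2 lerN2; apply/andP; split; apply: ler_wpM2l; try lra.
    exact: GS. exact: Gm.
have hA := L 0 sigma (lexx 0) (ltW s0) (lexx _).
have hB := Rr (1 - sigma) 1 (lexx _) (ltac:(lra)) (lexx _).
have hM := M sigma (1 - sigma) (lexx _) (ltW s2) (lexx _).
rewrite v0 v1 subr0 sub0r in hA hB.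
have e1 : 1 - (1 - sigma) = sigma by ring.
rewrite e1 in hB.
have lm0 : 0 <= lam * m by apply: mulr_ge0; lra.
have mm0 : 0 <= mu * m by apply: mulr_ge0; lra.
have Hv : forall r, r \in `[0, 1] -> `|v r| <= v (1 - sigma) - v sigma.
  move=> r; rewrite in_itv /= => /andP [r0 r1].
  have lmB : 0 <= lam * m * sigma by apply: mulr_ge0; lra.
  move/andP: hA => [hA1 hA2]; move/andP: hB => [hB1 hB2].
  rewrite ler_norml; apply/andP.
  have [rs|sr] := lerP r sigma.
    have /andP [a1 _] := L 0 r (lexx 0) r0 rs.
    have /andP [a2 _] := L r sigma r0 rs (lexx _).
    rewrite v0 in a1.
    have : 0 <= lam * m * (r - 0) by apply: mulr_ge0; lra.
    have : 0 <= lam * m * (sigma - r) by apply: mulr_ge0; lra.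
    split; lra.
  have [rs2|sr2] := lerP r (1 - sigma).
    have /andP [_ a1] := M sigma r (lexx _) (ltW sr) rs2.
    have /andP [_ a2] := M r (1 - sigma) (ltW sr) rs2 (lexx _).
    have : 0 <= mu * m * (r - sigma) by apply: mulr_ge0; lra.
    have : 0 <= mu * m * (1 - sigma - r) by apply: mulr_ge0; lra.
    split; lra.
  have /andP [a1 _] := Rr (1 - sigma) r (lexx _) (ltW sr2) r1.
  have /andP [a2 _] := Rr r 1 (ltW sr2) r1 (lexx _).
  rewrite v1 in a2.
  have : 0 <= lam * m * (r - (1 - sigma)) by apply: mulr_ge0; lra.
  have : 0 <= lam * m * (1 - r) by apply: mulr_ge0; lra.
  split; lra.
split.
- move/andP: hA => [h1 h2]; apply/andP; split; lra.
- move/andP: hB => [h1 h2]; apply/andP; split; lra.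
- move/andP: hM => [h1 h2]; apply/andP; split; lra.
- move=> s t s0' st t1; exact: u_lip Hder Hv s0' st t1.
Qed.
Lemma gfun_ratio {R : realType} (x y : R) : 0 < x < 1 -> 0 < y < 1 ->
  `|x - y| <= gfun y / 2 -> gfun y / 8 <= gfun x.
Proof.
rewrite /gfun => /andP [x0 x1] /andP [y0 y1] h.
have gy1 : y ^+ 2 * (1 - y) <= y by rewrite expr2; nra.
have yy : y * y <= 1 by nra.
have y1' : 0 < 1 - y by lra.
have gy2 : y ^+ 2 * (1 - y) <= 1 - y by rewrite expr2; nra.
have := ler_norm (x - y); have := ler_norm (- (x - y)); rewrite normrN => h1 h2.
have hx : y / 2 <= x by lra.
have hx' : (1 - y) / 2 <= 1 - x by lra.
have hx2 : y ^+ 2 / 4 <= x ^+ 2 by rewrite !expr2; nra.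
have : y ^+ 2 / 4 * ((1 - y) / 2) <= x ^+ 2 * (1 - x).
  apply: ler_pM => //; [by apply: divr_ge0; rewrite ?sqr_ge0 | lra].
lra.
Qed.

Lemma sol_facts {R : realType} (sigma lam mu : R) (u : R -> R) :
  0 < sigma -> sigma < 2^-1 -> 0 < lam -> 0 < mu -> is_solution sigma lam mu u ->
  exists v : R -> R, exists S : R, 0 < S /\
  let A := - v sigma in let B := v (1 - sigma) in
  [/\ A <= lam * sigma * S, B <= lam * sigma * S, A + B <= mu * (1 - 2 * sigma) * S &
   (A + B <= S / 4 -> [/\ lam * sigma * (S / 16) <= A, lam * sigma * (S / 16) <= B &
       mu * (1 - 2 * sigma) * (S / 16) <= A + B])].
Proof.
move=> s0 s1 l0 m0 [v [Hder [Hcont [HAC [Hu [Hae [v0 v1]]]]]]].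
have u01 t : 0 <= t -> t <= 1 -> 0 < u t < 1.
  move=> h1 h2; have [] := Hu t; first by rewrite in_itv /=; apply/andP.
  by move=> a b; apply/andP.
pose E := [set y | exists t, [/\ 0 <= t, t <= 1 & y = gfun (u t)]].
have g1 t : 0 <= t -> t <= 1 -> 0 < gfun (u t) <= 1.
  move=> h1 h2; have /andP [a b] := u01 t h1 h2; rewrite /gfun expr2.
  have c : 0 < u t * u t by apply: mulr_gt0.
  have d : u t * u t <= 1 by nra.
  apply/andP; split; first by apply: mulr_gt0; lra.
  nra.
have hE : has_sup E.
  split; first by exists (gfun (u 0)), 0; split => //; lra.
  exists 1 => y [t [h1 h2 ->]]; by have /andP [] := g1 t h1 h2.
set S := sup E.
have GS t : 0 <= t -> t <= 1 -> gfun (u t) <= S.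
  by move=> h1 h2; apply: sup_upper_bound => //; exists t.
have S0 : 0 < S.
  have /andP [h _] := g1 0 (lexx _) ler01; exact: lt_le_trans h (GS 0 (lexx _) ler01).
have S20 : 0 < S / 2 by rewrite divr_gt0.
have [y [t0 [t00 t01 ->]] hy] := sup_adherent S20 hE.
rewrite -/S in hy.
exists v, S; split => //.
have [hA hB hM hu] := @bounds R sigma lam mu u v 0 S s0 s1 l0 m0 Hder HAC Hae v0 v1 (lexx 0)
  (fun t h1 h2 => conj (ltW (proj1 (andP (g1 t h1 h2)))) (GS t h1 h2)).
move/andP: hA => [hA0 hA]; move/andP: hB => [hB0' hB]; rewrite mulr0 in hA0 hB0'; move/andP: hM => [_ hM].
rewrite /=; split => //; first lra.
move=> hB4.
have Gm : forall t, 0 <= t -> t <= 1 -> S / 16 <= gfun (u t) /\ gfun (u t) <= S.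
  move=> t h1 h2; split; last exact: GS.
  have hd : `|u t - u t0| <= gfun (u t0) / 2.
    have hB0 : 0 <= v (1 - sigma) - v sigma by lra.
    have [tt0|t0t] := lerP t t0.
      rewrite distrC; apply: le_trans (hu t t0 h1 tt0 t01) _.
      have : (v (1 - sigma) - v sigma) * (t0 - t) <= v (1 - sigma) - v sigma.
        by rewrite -[X in _ <= X]mulr1; apply: ler_wpM2l => //; lra.
      lra.
    apply: le_trans (hu t0 t t00 (ltW t0t) h2) _.
    have : (v (1 - sigma) - v sigma) * (t - t0) <= v (1 - sigma) - v sigma.
      by rewrite -[X in _ <= X]mulr1; apply: ler_wpM2l => //; lra.
    lra.
  have := @gfun_ratio R _ _ (u01 t h1 h2) (u01 t0 t00 t01) hd.
  lra.
have [hA' hB' hM' _] := @bounds R sigma lam mu u v (S / 16) S s0 s1 l0 m0 Hder HAC Hae v0 v1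
   (ltac:(apply: divr_ge0; lra)) Gm.
move/andP: hA' => [hA' _]; move/andP: hB' => [hB' _]; move/andP: hM' => [hM' _].
split; lra.
Qed.
Theorem theorem1p1 (R : realType) (sigma : R) (hsigma : 0 < sigma /\ sigma < 2^-1) :
  exists mu0s : R -> R,
    (forall lam : R, 0 < lam ->
       0 < mu0s lam /\
       forall mu : R, 0 < mu -> mu < mu0s lam ->
         ~ (exists u : R -> R, is_solution sigma lam mu u)) /\
    (exists2 lams : R, 0 < lams &
       forall lam : R, 0 < lam -> lam < lams ->
         exists2 mu0ss : R, mu0s lam < mu0ss &
           forall mu : R, mu0ss < mu ->
             ~ (exists u : R -> R, is_solution sigma lam mu u)).
Proof.
case: hsigma => s0 s1.
have s2 : 0 < 1 - 2 * sigma by lra.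
have hm lam : 0 < lam -> lam * sigma / (8 * (1 + lam)) <= lam * sigma / 8 /\
     lam * sigma / (8 * (1 + lam)) <= sigma / 8.
  move=> l0.
  have e : lam * sigma / (8 * (1 + lam)) = (lam / (1 + lam)) * (sigma / 8).
    by field; lra.
  have q1 : lam / (1 + lam) <= 1 by rewrite ler_pdivrMr; lra.
  have q2 : lam / (1 + lam) <= lam by rewrite ler_pdivrMr; nra.
  rewrite e; split; nra.
exists (fun lam => lam * sigma / (8 * (1 + lam))); split.
- move=> lam l0; split; first by apply: divr_gt0; [apply: mulr_gt0 | lra].
  move=> mu mu0 hmu [u sol].
  have [v [S [S0 [hA hB hM H4]]]] := @sol_facts R sigma lam mu u s0 s1 l0 mu0 sol.
  have [hm1 hm2] := hm lam l0.
  have q1 : mu * (1 - 2 * sigma) <= mu by nra.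
  have q2 : mu * (1 - 2 * sigma) * S <= mu * S by rewrite ler_pM2r.
  have q3 : mu * S <= S / 4 by nra.
  have [a b c] := H4 (ltac:(lra)).
  have q4 : (lam * sigma / 8) * S <= mu * S by lra.
  move: q4; rewrite ler_pM2r // => q4.
  lra.
- exists (1 / 4); first lra.
  move=> lam l0 l1.
  have [hm1 hm2] := hm lam l0.
  exists (32 * lam * sigma / (1 - 2 * sigma) + 1).
    have : 0 <= 32 * lam * sigma / (1 - 2 * sigma) by apply: divr_ge0; [nra | lra].
    lra.
  move=> mu hmu [u sol].
  have mu0 : 0 < mu.
    have : 0 <= 32 * lam * sigma / (1 - 2 * sigma) by apply: divr_ge0; [nra | lra].
    lra.
  have [v [S [S0 [hA hB hM H4]]]] := @sol_facts R sigma lam mu u s0 s1 l0 mu0 sol.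
  have q1 : lam * sigma <= 1 / 8 by nra.
  have q2 : lam * sigma * S <= S / 8 by nra.
  have [a b c] := H4 (ltac:(lra)).
  have q4 : (mu * (1 - 2 * sigma) / 16) * S <= (2 * lam * sigma) * S by lra.
  move: q4; rewrite ler_pM2r // => q4.
  have q5 : mu <= 32 * lam * sigma / (1 - 2 * sigma).
    by rewrite ler_pdivlMr //; lra.
  lra.
Qed.
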